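(* For all integers $n\ge 1$ and $k\ge 3$, the book graph $B_{n,k}$ is odd prime.
   Context: All graphs are finite and simple. A graph $G$ of order $N$ is odd prime if there is a bijection $\ell:V(G)\to\{1,3,\ldots,2N-1\}$ with $\gcd(\ell(u),\ell(v))=1$ for every edge $uv$. The book graph $B_{n,k}$ consists of $n$ cycles of length $k$ (pages) all sharing one common edge $uv$ and otherwise disjoint: it has vertices $u,v$ and $w_{i,j}$ for $1\le i\le n$, $1\le j\le k-2$, with edges $uv$, $uw_{i,1}$, $w_{i,j}w_{i,j+1}$ ($1\le j\le k-3$) and $w_{i,k-2}v$ for each $i$. It has $(k-2)n+2$ vertices. *)

(* Defs.v *)
From mathcomp Require Import all_boot.
Set Implicit Arguments. Unset Strict Implicit. Unset Printing Implicit Defensive.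

Definition simple_graph (V : finType) (e : rel V) : Prop :=
  irreflexive e /\ symmetric e.

Definition odd_labels (N : nat) (m : nat) : bool := odd m && (m < 2 * N).

Definition odd_prime_labeling (V : finType) (e : rel V) (l : V -> nat) : Prop :=
  [/\ injective l,
      (forall x, odd_labels #|V| (l x)),
      (forall m, odd_labels #|V| m -> exists x, l x = m)
    & (forall x y, e x y -> gcdn (l x) (l y) = 1)].

Definition odd_prime (V : finType) (e : rel V) : Prop :=
  exists l : V -> nat, odd_prime_labeling e l.

(* Book graph B_{n,k}.  Vertices: inl true = u, inl false = v,
   inr (i, j) = w_{i+1, j+1}  for i < n, j < k-2  (0-indexed). *)
Definition book_vertex (n k : nat) : finType := (bool + ('I_n * 'I_(k - 2)))%type.

Definition book_edge (n k : nat) (x y : book_vertex n k) : bool :=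
  match x, y with
  | inl a, inl b => a != b
  | inl true, inr (_, j) | inr (_, j), inl true => val j == 0 (* u w_{i,1} *)
  | inl false, inr (_, j) | inr (_, j), inl false =>
      val j == k - 3                                          (* w_{i,k-2} v *)
  | inr (i, j), inr (i', j') =>
      (i == i') && (((val j).+1 == val j') || ((val j').+1 == val j))
  end.

(* Main.v *)
Require Import Defs.
From mathcomp Require Import all_boot zify.
Lemma div2_bounds (n d : nat) : 0 < d -> 2*(n %/ d) <= (2*n) %/ d <= 2*(n %/ d) + 1.
Proof.
move=> d0.
have hr : n %% d < d by rewrite ltn_mod.
have e : 2*n = (2*(n %/ d))*d + 2*(n %% d).
  by rewrite {1}(divn_eq n d) mulnDr mulnA.
rewrite e divnMDl //.
have : (2 * (n %% d)) %/ d <= 1.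
  by rewrite -ltnS ltn_divLR // ltn_pmul2l.
move: ((2 * (n %% d)) %/ d) (n %/ d) => a b.  lia.
Qed.
Definition cc (n p k : nat) := (2*n) %/ p^k - 2 * (n %/ p^k).

Lemma logn_fact_widen p n B : prime p -> n < B ->
  logn p n`! = \sum_(1 <= k < B) n %/ p ^ k.
Proof.
move=> pp nB; rewrite logn_fact //.
rewrite [RHS](@big_cat_nat _ _ _ n.+1) //=.
rewrite [X in _ = _ + X]big1_seq ?addn0 // => k /andP[_].
rewrite mem_index_iota => /andP[hk _]; apply: divn_small.
apply: (leq_trans hk); apply: ltnW; apply: ltn_expl; exact: prime_gt1.
Qed.

Lemma logn_C p n : prime p ->
  logn p 'C(2*n, n) = \sum_(1 <= k < (2*n).+1) cc n p k.
Proof.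
move=> pp.
have hf := bin_fact (leq_addl n n : n <= n + n).
rewrite addnK addnn -mul2n in hf.
have : logn p (2*n)`! = logn p 'C(2 * n, n) + 2 * logn p n`!.
  rewrite -hf lognM ?muln_gt0 ?fact_gt0 ?bin_gt0 //; last lia.
  rewrite lognM ?fact_gt0 //; lia.
rewrite logn_fact // (@logn_fact_widen p n (2*n).+1 pp); last lia.
rewrite big_distrr /=.
have -> : \sum_(1 <= i < (2 * n).+1) (2 * n) %/ p ^ i =
          \sum_(1 <= i < (2 * n).+1) (2 * (n %/ p ^ i) + cc n p i).
  apply: eq_bigr => i _; rewrite /cc.
  have hp : 0 < p ^ i by rewrite expn_gt0 prime_gt0.
  have := @div2_bounds n _ hp; lia.
rewrite big_split /=; lia.
Qed.

Lemma cc_le1 n p k : prime p -> cc n p k <= 1.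
Proof.
move=> pp; have hp : 0 < p ^ k by rewrite expn_gt0 prime_gt0.
have := @div2_bounds n _ hp; rewrite /cc; lia.
Qed.

Lemma cc_0 n p k : 2*n < p^k -> cc n p k = 0.
Proof.
move=> h; rewrite /cc divn_small //; lia.
Qed.

Lemma sum_le_T B T : \sum_(1 <= k < B) (k <= T : nat) <= T.
Proof.
elim: B => [|B IH]; first by rewrite big_geq.
case: B IH => [|B] IH; first by rewrite big_geq.
rewrite big_nat_recr //=.
have : \sum_(1 <= k < B.+1) (k <= T : nat) <= B.
  apply: leq_trans (_ : \sum_(1 <= k < B.+1) 1 <= _).
    by apply: leq_sum => i _; case: (i <= T).
  by rewrite sum_nat_const_nat muln1 subn1.
case hb: (B.+1 <= T) => /=; lia.
Qed.

Lemma logC_le_trunc n p : prime p -> logn p 'C(2*n, n) <= trunc_log p (2*n).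
Proof.
move=> pp; rewrite logn_C //.
apply: leq_trans _ (sum_le_T (2*n).+1 (trunc_log p (2*n))).
apply: leq_sum => k _; case: (leqP k (trunc_log p (2*n))) => h.
  by rewrite cc_le1.
rewrite cc_0 //.
apply: leq_trans (trunc_log_ltn (2*n) (prime_gt1 pp)) _.
exact: leq_pexp2l (prime_gt0 pp) h.
Qed.

Lemma logC_L n p : 0 < n -> prime p -> p ^ logn p 'C(2*n, n) <= 2*n.
Proof.
move=> n0 pp; have n2 : 0 < 2*n by lia.
apply: leq_trans _ (@trunc_logP p (2*n) (prime_gt1 pp) n2).
exact: leq_pexp2l (prime_gt0 pp) (logC_le_trunc n p pp).
Qed.

Lemma logC_P n p : 0 < n -> prime p -> 2*n < p * p -> logn p 'C(2*n, n) <= 1.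
Proof.
move=> n0 pp h; apply: leq_trans (logC_le_trunc n p pp) _.
rewrite leqNgt; apply/negP => h2.
have := @trunc_logP p (2*n) (prime_gt1 pp).
have : p ^ 2 <= p ^ trunc_log p (2 * n) by exact: leq_pexp2l (prime_gt0 pp) _.
move=> h3 h4; have := h4 (ltac:(lia)).
move: h3; rewrite expnS expn1; lia.
Qed.

Lemma logC_M n p : prime p -> 2*n < 3*p -> p <= n -> 2*n < p * p ->
  logn p 'C(2*n, n) = 0.
Proof.
move=> pp h1 h2 h3; rewrite logn_C //.
apply: big1_seq => k; rewrite mem_index_iota => /andP[_ /andP[hk _]].
case: k hk => // [[|k]] _.
  rewrite /cc expn1.
  have p0 : 0 < p by rewrite prime_gt0.
  have -> : 2 * n = 2 * p + (2*n - 2*p) by lia.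
  have -> : n = 1 * p + (n - p) by lia.
  rewrite !divnMDl // !divn_small; lia.
apply: cc_0; apply: leq_trans h3 _; rewrite -(expn1 p) -expnS expn1.
exact: leq_pexp2l (prime_gt0 pp) _.
Qed.

Lemma prime_dvd_C n p : 0 < n -> prime p -> p %| 'C(2*n, n) -> p <= 2*n.
Proof.
move=> n0 pp hd; apply: leq_trans _ (logC_L n p n0 pp).
have : 0 < logn p 'C(2*n,n).
  by rewrite logn_gt0 mem_primes pp bin_gt0 hd; apply/andP; split => //; lia.
case: (logn _ _) => // l _; rewrite expnS; apply: leq_pmulr.
by rewrite expn_gt0 prime_gt0.
Qed.

Lemma prod_range m B : 0 < m -> (forall p, prime p -> p %| m -> p < B) ->
  m = \prod_(0 <= p < B) p ^ logn p m.
Proof.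
move=> m0 hB.
rewrite -{1}(partnT m0).
rewrite (@eq_in_partn _ [pred p | p < B]); last first.
  move=> p; rewrite mem_primes => /and3P[pp _ hd].
  by rewrite !inE /= hB.
rewrite (@widen_partn (m + B) _ m); last lia.
rewrite [RHS](@big_nat_widen _ _ _ 0 B (m+B).+1) //; lia.
Qed.

Lemma binrels n :
  [/\ (2*n).+1 * 'C(2*n, n) = n.+1 * 'C((2*n).+1, n.+1),
      'C((2*n).+2, n.+1) = 2 * 'C((2*n).+1, n) &
      'C((2*n).+1, n.+1) = 'C((2*n).+1, n) ].
Proof.
have e1 := mul_bin_diag (2*n).+1 n.
have e2 := mul_bin_diag (2*n).+2 n.
have e3 := mul_bin_left (2*n).+1 n.
have h : (2*n).+1 - n = n.+1 by lia.
rewrite h /= in e3; rewrite /= in e1 e2.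
have e3' : 'C((2*n).+1, n.+1) = 'C((2*n).+1, n).
  by apply/eqP; rewrite -(eqn_pmul2l (ltn0Sn n)) e3.
split => //.
apply/eqP; rewrite -(eqn_pmul2l (ltn0Sn n)) -e2; apply/eqP; lia.
Qed.

Lemma central_lb n : 4 ^ n.+1 <= 2 * n.+1 * 'C(2 * n.+1, n.+1).
Proof.
elim: n => [|n IH]; first by [].
have [e1 e2 e3] := binrels n.+1.
have -> : 2 * n.+2 = (2 * n.+1).+2 by lia.
rewrite e2 expnS.
have h : n.+2 * 'C((2 * n.+1).+1, n.+1) = (2 * n.+1).+1 * 'C(2 * n.+1, n.+1).
  by rewrite -e3 e1.
nia.
Qed.

Lemma E_bound k : 'C((2*k).+1, k) <= 4 ^ k.
Proof.
elim: k => [|k IH]; first by [].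
have [_ e2 _] := binrels k.
have e4 := mul_bin_diag (2*k).+3 k.+1.
have e5 := mul_bin_left (2*k).+3 k.+1.
have h : (2*k).+3 - k.+1 = k.+2 by lia.
rewrite h /= in e5; rewrite /= in e4.
have -> : (2 * k.+1).+1 = (2*k).+3 by lia.
rewrite expnS.
have : k.+2 * 'C((2 * k).+3, k.+1) <= k.+2 * (4 * 4 ^ k).
  rewrite -e5 -e4 e2; nia.
by rewrite leq_pmul2l.
Qed.

Lemma prime_dvd_fact p m : prime p -> p %| m`! -> p <= m.
Proof.
move=> pp hd; rewrite leqNgt; apply/negP => hm.
have : logn p m`! = 0.
  rewrite logn_fact //; apply: big1_seq => k.
  rewrite mem_index_iota => /andP[_ /andP[hk _]]; apply: divn_small.
  apply: leq_trans hm _; case: k hk => // k _.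
  by rewrite expnS leq_pmulr // expn_gt0 prime_gt0.
have : 0 < logn p m`! by rewrite logn_gt0 mem_primes pp fact_gt0 hd.
lia.
Qed.

Lemma mid_primes k : \prod_(k.+2 <= p < (2*k).+2 | prime p) p <= 'C((2*k).+1, k).
Proof.
set M := 'C((2*k).+1, k).
have M0 : 0 < M by rewrite bin_gt0; lia.
have hf := bin_fact (_ : k <= (2*k).+1); rewrite (_ : (2*k).+1 - k = k.+1) in hf; last lia.
have hf' := hf ltac:(lia).
have hM : M = \prod_(0 <= p < (2*k).+2) p ^ logn p M.
  apply: prod_range => // p pp hd.
  have : p %| ((2*k).+1)`! by rewrite -hf' dvdn_mulr.
  move/(@prime_dvd_fact p _ pp); lia.
rewrite [X in _ <= X]hM [X in _ <= X](@big_cat_nat _ _ _ k.+2) //=; last lia.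
apply: leq_trans (_ : \prod_(k.+2 <= p < (2*k).+2) p ^ logn p M <= _); last first.
  by apply: leq_pmull; apply: prodn_gt0 => i; exact: pfactor_gt0.
rewrite big_mkcond /= big_seq [X in _ <= X]big_seq.
apply: leq_prod => p; rewrite mem_index_iota => /andP[h1 h2].
case pp: (prime p); last exact: pfactor_gt0.
have hd : p %| M.
  have : p %| ((2*k).+1)`! by apply: dvdn_fact; lia.
  rewrite -hf' Euclid_dvdM // => /orP[//|]; rewrite Euclid_dvdM // => /orP[] h; have := @prime_dvd_fact p _ pp h; lia.
have : 0 < logn p M by rewrite logn_gt0 mem_primes pp M0 hd.
case: (logn p M) => // l _; rewrite expnS leq_pmulr // expn_gt0 prime_gt0 //.
Qed.

Lemma primorial m : \prod_(0 <= p < m.+1 | prime p) p <= 4 ^ m.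
Proof.
elim/ltn_ind: m => m IH.
case: (leqP m 2) => hm.
  by case: m hm IH => [|[|[|]]] //= _ _; rewrite unlock.
have [k hk] : exists k, m = k.*2 \/ m = k.*2.+1.
  exists m./2; have := odd_double_half m; case: (odd m) => /= h; [right|left]; lia.
case: hk => hk; subst m.
-
  rewrite big_mkcond big_nat_recr //= -big_mkcond /=.
  have np : prime k.*2 = false.
    apply/negP => /even_prime [h|]; first by rewrite h in hm.
    by rewrite odd_double.
  rewrite np muln1; case: k hm IH np => // k hm IH np.
  rewrite doubleS in IH hm np *.
  apply: leq_trans (IH k.*2.+1 (ltnSn _)) _.
  exact: leq_pexp2l.
- rewrite -mul2n (@big_cat_nat _ _ _ k.+2) //=; last lia.
  have h1 : \prod_(0 <= i < k.+2 | prime i) i <= 4 ^ k.+1 by apply: IH; lia.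
  have h2 := mid_primes k.
  have h3 := E_bound k.
  have -> : 4 ^ (2*k).+1 = 4 ^ k.+1 * 4 ^ k by rewrite -expnD; congr (_ ^ _); lia.
  apply: leq_mul => //; apply: leq_trans h2 h3.
Qed.

Lemma prod_if_le M A B : 0 < B ->
  \prod_(0 <= p < M) (if p <= A then B else 1) <= B ^ A.+1.
Proof.
move=> B0.
suff : \prod_(0 <= p < M) (if p <= A then B else 1) <= B ^ (minn M A.+1).
  move=> h; apply: leq_trans h _; apply: leq_pexp2l => //; exact: geq_minr.
elim: M => [|M IH]; first by rewrite big_geq.
rewrite big_nat_recr //=.
case: (leqP M A) => h.
  have -> : minn M.+1 A.+1 = (minn M A.+1).+1 by lia.
  by rewrite expnSr leq_mul2r IH orbT.
have -> : minn M.+1 A.+1 = minn M A.+1 by lia.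
by rewrite muln1.
Qed.

Lemma prod_h n :
  \prod_(0 <= p < (2*n).+1) (if prime p && (p*3 <= 2*n) then p else 1)
  <= 4 ^ ((2*n) %/ 3).
Proof.
rewrite -big_mkcond /=.
rewrite (eq_bigl (fun p => prime p && (p < ((2*n) %/ 3).+1))); last first.
  by move=> p; rewrite ltnS leq_divRL.
rewrite -(@big_nat_widen _ _ _ 0 ((2*n) %/ 3).+1 (2*n).+1); last first.
  rewrite ltnS; apply: leq_div.
exact: primorial.
Qed.

Lemma pow_big t : 8 <= t -> 32 * t <= 2 ^ t.
Proof.
elim: t => // t IH h.
case: (ltngtP t 7) => [h1|h1|->]; first lia; last by [].
rewrite expnS; have := IH ltac:(lia); lia.
Qed.

Ltac chainstep q := 
  let h := fresh in
  case: (ltnP _ q) => h; [exists q; split; [by [] | lia] | ].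

Lemma small_bertrand n : 0 < n -> n < 99*100+73 -> exists p, prime p /\ n < p <= 2*n.
Proof.
move=> n0 hn.
case: (ltnP n 2) => h; [exists 2; split; [by [] | lia] | ].
case: (ltnP n 3) => h'; [exists 3; split; [by [] | lia] | ].
case: (ltnP n 5) => h5; [exists 5; split; [by [] | lia] | ].
case: (ltnP n 7) => h7; [exists 7; split; [by [] | lia] | ].
case: (ltnP n 13) => h13; [exists 13; split; [by [] | lia] | ].
case: (ltnP n 23) => h23; [exists 23; split; [by [] | lia] | ].
case: (ltnP n 43) => h43; [exists 43; split; [by [] | lia] | ].
case: (ltnP n 83) => h83; [exists 83; split; [by [] | lia] | ].
case: (ltnP n 163) => h163; [exists 163; split; [by vm_compute | lia] | ].
case: (ltnP n 317) => h317; [exists 317; split; [by vm_compute | lia] | ].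
case: (ltnP n 631) => h631; [exists 631; split; [by vm_compute | lia] | ].
case: (ltnP n 1259) => h1259; [exists 1259; split; [by vm_compute | lia] | ].
case: (ltnP n 2503) => h2503; [exists 2503; split; [by vm_compute | lia] | ].
case: (ltnP n (50*100+3)) => h5003; [exists (50*100+3); split; [by vm_compute | lia] | ].
exists (99*100+73); split; [by vm_compute | lia].
Qed.

Lemma bertrand n : 0 < n -> exists p, prime p /\ n < p <= 2*n.
Proof.
move=> n0.
case: (ltnP n (99*100+73)) => hn; first exact: small_bertrand.
case: (boolP [exists p : 'I_(2*n).+1, prime p && (n < p)]) => [/existsP [p /andP[pp hp]] | hne].
  by exists p; split => //; rewrite hp /= -ltnS.
have hno : forall p, prime p -> n < p -> p <= 2*n -> False.
  move=> p pp h1 h2; move/existsP: hne; apply; exists (Ordinal (h2 : p < (2*n).+1)).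
  by rewrite /= pp h1.
set t := up_log 4 (2*n).
have ht1 : 2*n <= 4^t := up_logP _ (isT : 1 < 4).
have ht2 : 4^t.-1 < 2*n := up_log_gtn (isT : 1 < 4) (_ : 1 < 2*n).
have ht2' := ht2 ltac:(lia).
set a := 2 ^ t.
have ha : 4 ^ t = a * a by rewrite /a -expnMn.
have t8 : 8 <= t.
  rewrite leqNgt; apply/negP => h.
  have : 4 ^ t <= 4 ^ 7 by apply: leq_pexp2l; lia.
  have -> : 4 ^ 7 = 128 * 128 by [].
  lia.
have ht3 : a * a <= 4 * (2 * n).
  rewrite -ha; have : t = t.-1.+1 by lia.
  move=> ->; rewrite expnS; lia.
have hpb := @pow_big t t8; rewrite -/a in hpb.
set C := 'C(2*n, n).
have C0 : 0 < C by rewrite bin_gt0; lia.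
have hC : C = \prod_(0 <= p < (2*n).+1) p ^ logn p C.
  apply: prod_range => // p pp hd; rewrite ltnS; exact: prime_dvd_C.
pose g p := if p <= a then 2*n else 1.
pose h p := if prime p && (p*3 <= 2*n) then p else 1.
have hgh : C <= \prod_(0 <= p < (2*n).+1) (g p * h p).
  rewrite {1}hC big_seq [X in _ <= X]big_seq; apply: leq_prod => p.
  rewrite mem_index_iota => /andP[_ hp].
  have h0 : 0 < h p by rewrite /h; case: ifP => // /andP[pp _]; exact: prime_gt0.
  have g0 : 0 < g p by rewrite /g; case: ifP => //; lia.
  case pp: (prime p); last first.
    by rewrite lognE pp /= muln_gt0 h0 g0.
  case: (leqP p a) => hpa.
    rewrite /g hpa; apply: leq_trans (logC_L n p n0 pp) _.
    by rewrite leq_pmulr.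
  have hpp : 2*n < p * p by nia.
  have hl := logC_P n p n0 pp hpp.
  rewrite /g (leqNgt p a) hpa mul1n /h pp /=.
  case: (leqP (p*3) (2*n)) => h3.
    apply: leq_trans (_ : p ^ 1 <= p); last by rewrite expn1.
    exact: leq_pexp2l (prime_gt0 pp) hl.
  case: (leqP p n) => hpn.
    by rewrite (logC_M n p pp) //; lia.
  exfalso; apply: (hno p) => //; lia.
rewrite big_split /= in hgh.
have hg : \prod_(0 <= p < (2*n).+1) g p <= (2*n) ^ a.+1.
  by apply: prod_if_le; lia.
have hh := prod_h n.
have hl := central_lb n.-1.
rewrite prednK // -/C in hl.
set M := (2*n) %/ 3 in hh.
have hM : M * 3 <= 2*n by exact: leq_trunc_div.
have e1 : C <= (2*n) ^ a.+1 * 4 ^ M := leq_trans hgh (leq_mul hg hh).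
have e2 : (2*n) ^ a.+1 <= 4 ^ (t * a.+1) by rewrite expnM leq_exp2r.
have : 4 ^ n <= 4 ^ (t + t * a.+1 + M).
  apply: leq_trans hl _; rewrite -addnA !expnD; apply: leq_mul => //.
  apply: leq_trans e1 _; exact: leq_mul.
rewrite leq_exp2l // => hfin.
nia.
Qed.


Definition ff (p r : nat) := if 2*r+3 < p then 2*r+3 else 2*r+5.

Lemma ff_odd p r : odd (ff p r).
Proof. by rewrite /ff; case: ifP => _; rewrite oddD oddM. Qed.

Lemma ff_ge3 p r : 3 <= ff p r.
Proof. rewrite /ff; case: (ltnP (2*r+3) p) => _; lia. Qed.

Lemma ff_le p r : ff p r <= 2*r+5.
Proof. rewrite /ff; case: (ltnP (2*r+3) p) => _; lia. Qed.

Lemma ff_neq p r : odd p -> ff p r != p.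
Proof.
move=> op; rewrite /ff; case: (ltnP (2*r+3) p) => h; apply/eqP => e; lia.
Qed.

Lemma ff_mono p r s : r < s -> ff p r < ff p s.
Proof. rewrite /ff => h; case: (ltnP (2*r+3) p) => h1; case: (ltnP (2*s+3) p) => h2; lia. Qed.

Lemma ff_inj p r s : ff p r = ff p s -> r = s.
Proof.
move=> e; case: (ltngtP r s) => // h.
  by have := @ff_mono p _ _ h; rewrite e ltnn.
by have := @ff_mono p _ _ h; rewrite e ltnn.
Qed.

Lemma coprime_odd_add a d : odd a -> (d = 2 \/ d = 4) -> coprime a (a + d).
Proof.
move=> oa hd; rewrite /coprime gcdnDl -/(coprime a d).
case: hd => ->; first by rewrite coprimen2.
by rewrite (_ : 4 = 2 * 2) // coprimeMr coprimen2 oa.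
Qed.

Lemma ff_step p r : coprime (ff p r) (ff p r.+1).
Proof.
have : exists d, (d = 2 \/ d = 4) /\ ff p r.+1 = ff p r + d.
  rewrite /ff; case: (ltnP (2*r+3) p) => h1; case: (ltnP (2*r.+1+3) p) => h2.
  - by exists 2; split; [left|lia].
  - by exists 4; split; [right|lia].
  - lia.
  - by exists 2; split; [left|lia].
case=> d [hd ->]; apply: coprime_odd_add => //; exact: ff_odd.
Qed.

Lemma ff_coprime p r : prime p -> odd p -> ff p r < 3 * p -> coprime p (ff p r).
Proof.
move=> pp op h; rewrite prime_coprime //; apply/negP => /dvdnP [q hq].
have ho := ff_odd p r; have hn := @ff_neq p r op; have h3 := ff_ge3 p r.
rewrite hq in ho hn h3 h.
case: q hq ho hn h3 h => [|[|[|q]]] _ ho hn h3 h.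
- lia.
- by rewrite mul1n eqxx in hn.
- by rewrite oddM in ho.
- nia.
Qed.

Theorem theorem3p4 (n k : nat) : 1 <= n -> 3 <= k ->
  odd_prime (@book_edge n k).
Proof.
move=> n1 k3.
have hN : #|book_vertex n k| = (n*(k-2)).+2.
  rewrite /book_vertex card_sum card_bool card_prod !card_ord; lia.
have [p [pp /andP[hp1 hp2]]] := @bertrand _ (ltn0Sn (n*(k-2))).
have op : odd p.
  case: (even_prime pp) => // p2; move: hp1; rewrite p2; nia.
pose l := fun x : book_vertex n k => match x with
  | inl b => if b then 1 else p
  | inr ij => ff p (ij.1 * (k-2) + ij.2) end.
exists l.
have hidx : forall (i : 'I_n) (j : 'I_(k-2)), i * (k-2) + j < n * (k-2).
  move=> i j; have hi := ltn_ord i; have hj := ltn_ord j; nia.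
have ff3p : forall r, r < n * (k-2) -> ff p r < 3 * p.
  move=> r hr; have := ff_le p r; lia.
rewrite /odd_prime_labeling hN; split.
- move=> [[]|[i j]] [[]|[i' j']] //=; rewrite /l /=.
  + lia.
  + have := ff_ge3 p (i' * (k-2) + j'); lia.
  + lia.
  + move=> e; have := @ff_neq p (i' * (k - 2) + j') op; rewrite -e eqxx //.
  + have := ff_ge3 p (i * (k-2) + j); lia.
  + move=> e; have := @ff_neq p (i * (k - 2) + j) op; rewrite e eqxx //.
  + move/ff_inj => e.
    have hj := ltn_ord j; have hj' := ltn_ord j'.
    have ei : i = i' :> nat.
      have := congr1 (fun x => x %/ (k-2)) e.
      rewrite /= !divnMDl ?(divn_small hj) ?(divn_small hj') //; lia.
    have ej : j = j' :> nat by rewrite ei in e; lia.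
    by congr inr; congr pair; apply: val_inj.
- move=> [[]|[i j]]; rewrite /odd_labels /l /=.
  + lia.
  + by rewrite op /=; lia.
  + rewrite ff_odd /=; have := ff_le p (i * (k-2) + j); have := hidx i j; lia.
- move=> x /andP[ox hx].
  case: (eqVneq x 1) => [->|x1]; first by exists (inl true).
  case: (eqVneq x p) => [->|xp]; first by exists (inl false).
  have ex : x = 2 * x./2 + 1 by rewrite -[x in x = _]odd_double_half ox -mul2n; lia.
  have ep : p = 2 * p./2 + 1 by rewrite -[p in p = _]odd_double_half op -mul2n; lia.
  set h := x./2 in ex; set q := p./2 in ep.
  have x1' : x != 1 := x1.
  pose r := if x < p then h - 1 else h - 2.
  have hr : ff p r = x /\ r < n * (k-2).
    rewrite /r /ff; case: (ltnP x p) => hxp.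
      have -> : 2 * (h-1) + 3 = x by move/eqP: x1'; lia.
      rewrite hxp; split => //; move/eqP: x1'; lia.
    have hxp' : p < x by rewrite ltn_neqAle eq_sym xp hxp.
    have -> : 2 * (h-2) + 3 < p = false by apply/negbTE; rewrite -leqNgt; lia.
    split; lia.
  case: hr => hr1 hr2.
  have km : 0 < k - 2 by lia.
  have hi : r %/ (k-2) < n by rewrite ltn_divLR.
  have hj : r %% (k-2) < k - 2 by rewrite ltn_mod.
  exists (inr (Ordinal hi, Ordinal hj)); rewrite /l /= -divn_eq //.
- move=> [[]|[i j]] [[]|[i' j']] //=; rewrite /l /=;
    try by move=> _; rewrite ?gcd1n ?gcdn1.
  + move=> _; apply/eqP; exact: (@ff_coprime p _ pp op (ff3p _ (hidx _ _))).
  + move=> _; rewrite gcdnC; apply/eqP; exact: (@ff_coprime p _ pp op (ff3p _ (hidx _ _))).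
  + move=> /andP[/eqP ei /orP[/eqP ej|/eqP ej]].
    * have -> : i' * (k-2) + j' = (i * (k-2) + j).+1 by rewrite -ei -ej; lia.
      apply/eqP; exact: ff_step.
    * have -> : i * (k-2) + j = (i' * (k-2) + j').+1 by rewrite ei -ej; lia.
      rewrite gcdnC; apply/eqP; exact: ff_step.
Qed.
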